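(* For all non-negative integers $n$ and $p$, $$\sum_{k=1}^n\frac{1}{2^{2k}}\binom{2(k+p)}{k+p}\binom{k+p}{k}\left(O_{k+p}-O_p\right)=\frac{1}{2^{2n+1}}\,\frac{p+1}{2p+1}\binom{2(n+p+1)}{n+p+1}\binom{n+p+1}{n}\left(O_{n+p+1}-O_{p+1}\right).$$ In particular, $\sum_{k=1}^n\frac{O_k}{2^{2k}}\binom{2k}{k}=\frac{n+1}{2^{2n+1}}\binom{2(n+1)}{n+1}(O_{n+1}-1)$.
   Context: The odd harmonic numbers are $O_n=\sum_{k=1}^n\frac{1}{2k-1}$, $O_0=0$. *)

(* Defs.v *)
From mathcomp Require Import all_boot all_order all_algebra.
Set Implicit Arguments. Unset Strict Implicit. Unset Printing Implicit Defensive.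
Import Order.TTheory GRing.Theory Num.Theory.
Local Open Scope ring_scope.

Definition oddH (n : nat) : rat := \sum_(1 <= k < n.+1) ((2 * k - 1)%N%:R)^-1.

(* Main.v *)
Require Import Defs.
From mathcomp Require Import all_boot all_order all_algebra.
From mathcomp Require Import ring lra zify.

Import Order.TTheory GRing.Theory Num.Theory.
Local Open Scope ring_scope.

Lemma oddHS m : oddH m.+1 = oddH m + ((2 * m + 1)%:R)^-1.
Proof.
rewrite /oddH big_nat_recr //=; congr (_ + _ ^-1); congr (_%:R); lia.
Qed.

Lemma L1 N : ('C(2 * N.+1, N.+1))%:R = 2 * (2 * N + 1)%:R / (N.+1)%:R * ('C(2 * N, N))%:R :> rat.
Proof.
have h1 := mul_bin_diag (2 * N.+1) N.
have h2 := mul_bin_down (2 * N).+1 N.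
have e1 : (2 * N.+1).-1 = (2 * N).+1 by lia.
have e2 : ((2 * N).+1 - N = N.+1)%N by lia.
rewrite e1 in h1; rewrite e2 /= in h2.
have /(congr1 (fun x : nat => x%:R : rat)) := h1.
have /(congr1 (fun x : nat => x%:R : rat)) := h2.
rewrite !natrM => H2 H1.
have nz : (N.+1)%:R != 0 :> rat by rewrite pnatr_eq0.
have nz' : 1 + N%:R != 0 :> rat by rewrite addrC natr1 pnatr_eq0.
have -> : ('C(2 * N.+1, N.+1))%:R = (2 * N.+1)%:R * ('C((2 * N).+1, N))%:R / (N.+1)%:R :> rat.
  by apply: (mulfI nz); rewrite -H1; field.
have -> : ('C((2 * N).+1, N))%:R = ((2 * N).+1)%:R * ('C(2 * N, N))%:R / (N.+1)%:R :> rat.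
  by apply: (mulfI nz); rewrite -H2; field.
rewrite !natrM !natrD /=. field; exact: nz'.
Qed.

Lemma L2 N n : ('C(N.+1, n.+1))%:R = (N.+1)%:R / (n.+1)%:R * ('C(N, n))%:R :> rat.
Proof.
have h := mul_bin_diag N.+1 n. rewrite /= in h.
have /(congr1 (fun x : nat => x%:R : rat)) := h.
rewrite !natrM => H.
apply: (mulIf (x := (n.+1)%:R)); first by rewrite pnatr_eq0.
rewrite [_ * _%:R]mulrC -H. field; by rewrite addrC natr1 pnatr_eq0.
Qed.

Lemma L3 n p : ('C(n + p + 1, n.+1))%:R = (p + 1)%:R / (n.+1)%:R * ('C(n + p + 1, n))%:R :> rat.
Proof.
have h := mul_bin_left (n + p + 1) n.
have e : (n + p + 1 - n = p + 1)%N by lia. rewrite e in h.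
have /(congr1 (fun x : nat => x%:R : rat)) := h.
rewrite !natrM => H.
apply: (mulIf (x := (n.+1)%:R)); first by rewrite pnatr_eq0.
rewrite [_ * _%:R]mulrC H. field; by rewrite addrC natr1 pnatr_eq0.
Qed.

Lemma part1 n p :
    \sum_(1 <= k < n.+1)
       (2 ^+ (2 * k))^-1 * ('C(2 * (k + p), k + p))%:R * ('C(k + p, k))%:R
         * (oddH (k + p) - oddH p)
    = (2 ^+ (2 * n + 1))^-1 * ((p + 1)%:R / (2 * p + 1)%:R)
        * ('C(2 * (n + p + 1), n + p + 1))%:R * ('C(n + p + 1, n))%:R
        * (oddH (n + p + 1) - oddH (p + 1)) :> rat.
Proof.
elim: n => [|n IH].
  by rewrite big_geq // add0n subrr mulr0.
rewrite big_nat_recr //= IH.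
have e1 : (n.+1 + p + 1 = (n + p + 1).+1)%N by lia.
have e2 : (n.+1 + p = n + p + 1)%N by lia.
have e3 : (2 * n.+1 + 1 = (2 * n + 1) + 2)%N by lia.
have e4 : (2 * n.+1 = (2 * n + 1) + 1)%N by lia.
rewrite e1 e2 e3 e4 L1 L2 L3 oddHS.
have -> : oddH (p + 1) = oddH p + ((2 * p + 1)%:R)^-1 by rewrite addn1 oddHS.
rewrite !exprD.
set N := (n + p + 1)%N.
have hN : N = (n + p + 1)%N by [].
move: (oddH N) (oddH p) ('C(2 * N, N))%:R ('C(N, n))%:R => a b c d.
rewrite hN ?natrD ?natrM /=.
have q : 0 < 2 ^+ (2 * n + 1) :> rat by apply: exprn_gt0.
have pn : 0 <= n%:R :> rat by [].
have pp : 0 <= p%:R :> rat by [].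
field.
apply/and5P; split; apply: lt0r_neq0; try lra; exact: exprn_gt0.
Qed.

Lemma oddH0 : oddH 0 = 0.
Proof. by rewrite /oddH big_geq. Qed.

Theorem theorem11 :
  (forall n p : nat,
    \sum_(1 <= k < n.+1)
       (2 ^+ (2 * k))^-1 * ('C(2 * (k + p), k + p))%:R * ('C(k + p, k))%:R
         * (oddH (k + p) - oddH p)
    = (2 ^+ (2 * n + 1))^-1 * ((p + 1)%:R / (2 * p + 1)%:R)
        * ('C(2 * (n + p + 1), n + p + 1))%:R * ('C(n + p + 1, n))%:R
        * (oddH (n + p + 1) - oddH (p + 1)) :> rat)
  /\
  (forall n : nat,
    \sum_(1 <= k < n.+1) oddH k / 2 ^+ (2 * k) * ('C(2 * k, k))%:R
    = (n + 1)%:R / 2 ^+ (2 * n + 1) * ('C(2 * (n + 1), n + 1))%:R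
        * (oddH (n + 1) - 1) :> rat).
Proof.
split; first exact: part1.
move=> n; have := part1 n 0.
rewrite (eq_bigr (fun k => oddH k / 2 ^+ (2 * k) * ('C(2 * k, k))%:R)); last first.
  by move=> k _; rewrite !addn0 oddH0 subr0 binn mulr1n mulr1 [LHS]mulrC mulrA.
rewrite !addn0 (addn1 n) binSn.
have -> : oddH (0 + 1) = 1 by rewrite add0n oddHS oddH0 add0r muln0 add0n invr1.
move=> ->. rewrite ?muln0 ?add0n ?divr1 ?mulr1 ?addn1.
rewrite [_ / _]mulrC; congr (_ * _); rewrite -!mulrA; congr (_ * _); exact: mulrC.
Qed.
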